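(* Let $b_1,\dots,b_k$ be positive integers and $n_1,\dots,n_k$ integers with $\sum_in_ib_i=0$, and let $\alpha^{\mathfrak a}=\prod_{i=1}^k\big(c^{\mathfrak a}_1\cdots c^{\mathfrak a}_{b_i}\big)^{n_i}$. Then for every odd $m\ge3$, $$\frac{\delta_m\alpha^{\mathfrak a}}{\alpha^{\mathfrak a}}=-\frac{T^m}{m}\sum_{i=1}^kn_ib_i^m.$$
   Context: $\mathcal M^{(1)}=\mathbb Q[\zeta^{\mathfrak a}(3),\zeta^{\mathfrak a}(5),\dots]$ is the free polynomial subalgebra of depth-one motivic MZVs in $\mathcal A=\mathcal H/\zeta^{\mathfrak m}(2)\mathcal H$; $\zeta^{\mathfrak a}(k)=0$ for even $k$. For odd $m\ge3$, $\delta_m$ is the continuous $\mathbb Q((T))$-linear derivation $\partial/\partial\zeta^{\mathfrak a}(m)$ of $\mathcal M^{(1)}((T))$. $H^{\mathfrak a}(n)=(-1)^n\sum_{j\ge1}\binom{n+j-1}{n-1}\zeta^{\mathfrak a}(n+j)T^j$; $H^{\mathfrak a}(1^0)=1$, $H^{\mathfrak a}(1^n)=\frac1n\sum_{i=1}^n(-1)^{i-1}H^{\mathfrak a}(i)H^{\mathfrak a}(1^{n-i})$; $c_n^{\mathfrak a}=n\sum_{j\ge0}(n-1)^jT^jH^{\mathfrak a}(1^j)$ for $n\ge1$ (invertible in $\mathcal M^{(1)}[[T]]$). *)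

(* Defs.v *)
From HB Require Import structures.
From mathcomp Require Import all_boot all_order all_algebra.
Set Implicit Arguments. Unset Strict Implicit. Unset Printing Implicit Defensive.
Import Order.TTheory GRing.Theory Num.Theory.
Local Open Scope ring_scope.

(* MP K = Q[z_0, ..., z_{K-1}], built as iterated univariate polynomial rings;
   z_j stands for zeta^a(2j+3).  MP K is the image of M^(1) under the
   ring morphism sending zeta^a(2j+3) to z_j for j < K and to 0 for j >= K. *)
Fixpoint MP (K : nat) : idomainType :=
  match K with
  | 0 => rat
  | K'.+1 => ({poly (MP K')} : idomainType)
  end.

Fixpoint zvar (K j : nat) : MP K :=
  match K return MP K with
  | 0 => 0
  | K'.+1 => if j == K' then 'X else (zvar K' j)%:P
  end.

Fixpoint pdz (K j : nat) : MP K -> MP K :=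
  match K return MP K -> MP K with
  | 0 => fun _ => 0
  | K'.+1 => fun p => if j == K' then deriv p else map_poly (@pdz K' j) p
  end.

Definition zeta (K k : nat) : MP K :=
  if odd k && (3 <= k)%N then zvar K (k - 3)./2 else 0.

Definition ps (R : Type) := nat -> R.

Section PS.
Variable R : unitRingType.
Definition ps1 : ps R := fun n => (n == 0)%:R.
Definition psmul (f g : ps R) : ps R :=
  fun n => \sum_(i < n.+1) f i * g (n - i)%N.
Fixpoint psinv_list (f : ps R) (n : nat) : seq R :=
  match n with
  | 0 => [:: (f 0%N)^-1]
  | n'.+1 => let s := psinv_list f n' in
      rcons s (- (f 0%N)^-1 * \sum_(1 <= i < n'.+2) f i * nth 0 s (n'.+1 - i))
  end.
Definition psinv (f : ps R) : ps R := fun n => nth 0 (psinv_list f n) n.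
Definition psexpz (f : ps R) (z : int) : ps R :=
  match z with
  | Posz n => iter n (psmul f) ps1
  | Negz n => psinv (iter n.+1 (psmul f) ps1)
  end.
Definition psprod (s : seq (ps R)) : ps R := foldr psmul ps1 s.
End PS.

(* delta_m acting coefficientwise; zeta^a(m) corresponds to z_{(m-3)/2} *)
Definition delta (K m : nat) (f : ps (MP K)) : ps (MP K) :=
  fun n => @pdz K ((m - 3)./2) (f n).

Definition Hs (K n : nat) : ps (MP K) :=
  fun j => if j == 0%N then 0
           else (-1) ^+ n * ('C(n + j - 1, n - 1))%:R * zeta K (n + j).

Fixpoint H1list (K n : nat) : seq (ps (MP K)) :=
  match n with
  | 0 => [:: ps1 (MP K)]
  | n'.+1 => let s := H1list K n' in
      rcons s (fun t => (n'.+1%:R)^-1 *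
        \sum_(1 <= i < n'.+2)
            (-1) ^+ (i - 1) * psmul (Hs K i) (nth (ps1 (MP K)) s (n'.+1 - i)) t)
  end.
Definition H1 (K n : nat) : ps (MP K) := nth (ps1 (MP K)) (H1list K n) n.

Definition cser (K n : nat) : ps (MP K) :=
  fun t => n%:R * \sum_(j < t.+1) (n.-1)%:R ^+ j * H1 K j (t - j)%N.

Definition cprod (K b : nat) : ps (MP K) :=
  psprod [seq cser K j.+1 | j <- iota 0 b].

Definition alpha (K k : nat) (b : 'I_k -> nat) (n : 'I_k -> int) : ps (MP K) :=
  psprod [seq psexpz (cprod K (b i)) (n i) | i <- enum 'I_k].

(* Main.v *)
Require Import Defs.
From HB Require Import structures.
From mathcomp Require Import all_boot all_order all_algebra.
From mathcomp Require Import zify ring.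
From Stdlib Require Import FunctionalExtensionality.
Import Order.TTheory GRing.Theory Num.Theory.
Local Open Scope ring_scope.

Module Helpers.
Set Implicit Arguments. Unset Strict Implicit. Unset Printing Implicit Defensive.


Lemma pdz0 K j : pdz j (0 : MP K) = 0.
Proof.
elim: K => [|K IH] //=; case: (j == K); first exact: deriv0.
exact: map_poly0.
Qed.

Lemma pdzD K j (p q : MP K) : pdz j (p + q) = pdz j p + pdz j q.
Proof.
elim: K p q => [|K IH] p q /=; first by rewrite addr0.
case: (j == K); first exact: derivD.
apply/polyP => i; rewrite coefD !coef_map_id0 ?pdz0 // coefD; exact: IH.
Qed.

Lemma pdz_sum K j I (r : seq I) (P : pred I) (F : I -> MP K) :
  pdz j (\sum_(i <- r | P i) F i) = \sum_(i <- r | P i) pdz j (F i).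
Proof. exact: (big_morph _ (@pdzD K j) (pdz0 K j)). Qed.

Lemma pdzM K j (p q : MP K) : pdz j (p * q) = pdz j p * q + p * pdz j q.
Proof.
elim: K p q => [|K IH] p q /=; first by rewrite mul0r mulr0 addr0.
case: (j == K); first exact: derivM.
apply/polyP => i; rewrite coefD !coef_map_id0 ?pdz0 // !coefM pdz_sum -big_split /=.
apply: eq_bigr => l _; rewrite IH coef_map_id0 ?pdz0 //.
by rewrite coef_map_id0 ?pdz0.
Qed.

Lemma pdz1 K j : pdz j (1 : MP K) = 0.
Proof.
have := pdzM j (1 : MP K) 1; rewrite !mul1r mulr1 => h.
by apply: (@addrI _ (pdz j (1 : MP K))); rewrite addr0 -h.
Qed.

Lemma pdzn K j n : pdz j (n%:R : MP K) = 0.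
Proof. elim: n => [|n IH]; first exact: pdz0. by rewrite mulrS pdzD pdz1 IH addr0. Qed.

Lemma pdzN K j (p : MP K) : pdz j (- p) = - pdz j p.
Proof. by apply/eqP; rewrite -subr_eq0 opprK -pdzD addNr pdz0. Qed.

Lemma pdz_zvar K j j' : (j < K)%N -> pdz j (zvar K j') = (j' == j)%:R.
Proof.
elim: K => [|K IH] //= hj.
have [ejK|hjK] := eqVneq j K.
  subst j.
  have [_|hj'K] := eqVneq j' K; first by rewrite derivX.
  by rewrite derivC.
have hjK' : (j < K)%N by move: hj hjK; lia.
have [ej'K|hj'K] := eqVneq j' K.
  subst j'; rewrite eq_sym (negbTE hjK).
  apply/polyP => i; rewrite coef_map_id0 ?pdz0 // coefX coef0.
  by case: (i == 1%N); rewrite ?pdz1 ?pdz0.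
apply/polyP => i; rewrite coef_map_id0 ?pdz0 // -polyC_natr !coefC.
by case: (i == 0%N); rewrite ?pdz0 // IH.
Qed.

Lemma pdz_zeta K m k : odd m -> (3 <= m)%N -> ((m-3)./2 < K)%N ->
  pdz ((m-3)./2) (zeta K k) = (k == m)%:R.
Proof.
move=> om m3 hK; rewrite /zeta.
case: ifP => [/andP[ok k3]|hk]; last first.
  rewrite pdz0; case: eqP => // e; subst k; by rewrite om m3 in hk.
rewrite pdz_zvar //; congr (_%:R).
have om' : (m %% 2 = 1)%N by rewrite modn2 om.
have ok' : (k %% 2 = 1)%N by rewrite modn2 ok.
rewrite -!divn2.
apply/eqP/eqP; lia.
Qed.

Lemma MP_unit K n : (0 < n)%N -> (n%:R : MP K) \is a GRing.unit.
Proof.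
move=> n0; elim: K => [|K IH] /=.
  by rewrite unitfE pnatr_eq0 -lt0n.
rewrite -polyC_natr; exact: (rmorph_unit (@polyC _) IH).
Qed.


Section PSA.
Variable R : comUnitRingType.
Implicit Types f g h : ps R.

Definition psadd f g : ps R := fun n => f n + g n.
Definition psscale (c : R) f : ps R := fun n => c * f n.
Definition psE (m : nat) : ps R := fun n => (n == m)%:R.
Definition tr n f : {poly R} := \poly_(i < n.+1) f i.

Lemma psmul_polyE f g (P Q : {poly R}) n :
  (forall i, (i <= n)%N -> P`_i = f i) -> (forall i, (i <= n)%N -> Q`_i = g i) ->
  psmul f g n = (P * Q)`_n.
Proof.
move=> hP hQ; rewrite coefM /psmul; apply: eq_bigr => i _.
by rewrite hP ?hQ ?leq_subr // -ltnS ltn_ord.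
Qed.

Lemma trE n f i : (i <= n)%N -> (tr n f)`_i = f i.
Proof. by move=> h; rewrite coef_poly ltnS h. Qed.

Lemma psmul_tr f g n i : (i <= n)%N -> (tr n f * tr n g)`_i = psmul f g i.
Proof.
move=> hi; symmetry; apply: psmul_polyE => j hj; apply: trE; exact: leq_trans hj hi.
Qed.

Lemma psmulC f g : psmul f g = psmul g f.
Proof.
apply: functional_extensionality => n.
rewrite (@psmul_polyE f g (tr n f) (tr n g)); try by move=> i; apply: trE.
rewrite mulrC.
by apply: esym; apply: psmul_polyE => i; apply: trE.
Qed.

Lemma psmulA f g h : psmul f (psmul g h) = psmul (psmul f g) h.
Proof.
apply: functional_extensionality => n.
rewrite (@psmul_polyE f (psmul g h) (tr n f) (tr n g * tr n h)); last 2 first.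
- by move=> i; apply: trE.
- by move=> i; apply: psmul_tr.
rewrite (@psmul_polyE (psmul f g) h (tr n f * tr n g) (tr n h)); first by rewrite mulrA.
- by move=> i; apply: psmul_tr.
- by move=> i; apply: trE.
Qed.

Lemma psmul1l f : psmul (ps1 R) f = f.
Proof.
apply: functional_extensionality => n.
rewrite (@psmul_polyE _ f 1 (tr n f)).
- by rewrite mul1r trE.
- by move=> i _; rewrite coef1.
- by move=> i; apply: trE.
Qed.

Lemma psmul1r f : psmul f (ps1 R) = f.
Proof. by rewrite psmulC psmul1l. Qed.

Lemma psmulCA f g h : psmul f (psmul g h) = psmul g (psmul f h).
Proof. by rewrite psmulA (psmulC f g) -psmulA. Qed.

Lemma psmulACA f g h (k : ps R) :
  psmul (psmul f g) (psmul h k) = psmul (psmul f h) (psmul g k).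
Proof. by rewrite -!psmulA (psmulCA g h). Qed.

Lemma psmulDl f g h : psmul (psadd f g) h = psadd (psmul f h) (psmul g h).
Proof.
apply: functional_extensionality => n.
by rewrite /psmul /psadd -big_split; apply: eq_bigr => i _; rewrite mulrDl.
Qed.

Lemma psmulZl c f g : psmul (psscale c f) g = psscale c (psmul f g).
Proof.
apply: functional_extensionality => n.
by rewrite /psmul /psscale mulr_sumr; apply: eq_bigr => i _; rewrite mulrA.
Qed.

Lemma psmul0l f : psmul (fun _ => 0) f = (fun _ => 0).
Proof.
apply: functional_extensionality => n.
by rewrite /psmul big1 // => i _; rewrite mul0r.
Qed.

Lemma psmulEl m f t : psmul (psE m) f t = if (m <= t)%N then f (t - m)%N else 0.
Proof.
rewrite (@psmul_polyE _ f ('X ^+ m) (tr t f)) ?coefXnM; last 2 first.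
- by move=> i _; rewrite coefXn.
- by move=> i; apply: trE.
by case: leqP => h; rewrite ?trE ?leq_subr.
Qed.

Lemma psmul_at0 f g : psmul f g 0 = f 0 * g 0.
Proof. by rewrite /psmul big_ord1. Qed.

Lemma size_psinv_list f n : size (psinv_list f n) = n.+1.
Proof. by elim: n => [|n IH] //=; rewrite size_rcons IH. Qed.

Lemma psinv_listE f n i : (i <= n)%N -> nth 0 (psinv_list f n) i = psinv f i.
Proof.
elim: n i => [|n IH] i hi; first by case: i hi.
rewrite /= nth_rcons size_psinv_list; case: ltnP => h; first exact: IH.
have -> : i = n.+1 by lia.
by rewrite eqxx /psinv /= nth_rcons size_psinv_list ltnn eqxx.
Qed.

Lemma psinvS f n : psinv f n.+1 =
  - (f 0%N)^-1 * \sum_(1 <= i < n.+2) f i * psinv f (n.+1 - i)%N.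
Proof.
rewrite {1}/psinv /= nth_rcons size_psinv_list ltnn eqxx; congr (_ * _).
apply: eq_big_nat => i /andP[h1 h2]; rewrite psinv_listE //; lia.
Qed.

Definition psunit f := f 0%N \is a GRing.unit.

Lemma psmulV f : psunit f -> psmul f (psinv f) = ps1 R.
Proof.
move=> u; apply: functional_extensionality => n; case: n => [|n].
  by rewrite psmul_at0 /psinv /= mulrV.
rewrite /psmul big_ord_recl subn0 psinvS big_add1 /= big_mkord.
rewrite mulrA mulrN mulrV // mulN1r /ps1 /=.
rewrite addNr //.
Qed.

Lemma psinv_uniq f g : psunit f -> psmul f g = ps1 R -> g = psinv f.
Proof.
move=> u h.
by rewrite -[g]psmul1l -(psmulV u) (psmulC f) -psmulA h psmul1r.
Qed.

Lemma psunitM f g : psunit f -> psunit g -> psunit (psmul f g).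
Proof. by rewrite /psunit psmul_at0 => uf ug; rewrite unitrM uf ug. Qed.

Lemma psunitV f : psunit f -> psunit (psinv f).
Proof. by rewrite /psunit /psinv /= unitrV. Qed.

Lemma psunit1 : psunit (ps1 R).
Proof. by rewrite /psunit /ps1 /= unitr1. Qed.

Lemma psinvK f : psunit f -> psinv (psinv f) = f.
Proof.
move=> u; symmetry; apply: psinv_uniq; first exact: psunitV.
by rewrite psmulC psmulV.
Qed.

Lemma psinvM f g : psunit f -> psunit g ->
  psinv (psmul f g) = psmul (psinv f) (psinv g).
Proof.
move=> uf ug; symmetry; apply: psinv_uniq; first exact: psunitM.
by rewrite psmulACA !psmulV // psmul1l.
Qed.

Section Der.
Variable d : R -> R.
Hypothesis dD : forall x y, d (x + y) = d x + d y.
Hypothesis dM : forall x y, d (x * y) = d x * y + x * d y.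

Lemma d0 : d 0 = 0.
Proof. by apply: (@addrI _ (d 0)); rewrite -dD !addr0. Qed.

Lemma d1 : d 1 = 0.
Proof. have h := dM 1 1; rewrite !mulr1 mul1r in h. by apply: (@addrI _ (d 1)); rewrite addr0 -h. Qed.

Lemma dn n : d n%:R = 0.
Proof. elim: n => [|n IH]; first exact: d0. by rewrite mulrS dD d1 IH addr0. Qed.

Lemma dsum I (r : seq I) (P : pred I) (F : I -> R) :
  d (\sum_(i <- r | P i) F i) = \sum_(i <- r | P i) d (F i).
Proof. exact: (big_morph _ dD d0). Qed.

Lemma dN x : d (- x) = - d x.
Proof. by apply/eqP; rewrite -subr_eq0 opprK -dD addNr d0. Qed.

Lemma dMn n x : d (n%:R * x) = n%:R * d x.
Proof. by rewrite dM dn mul0r add0r. Qed.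

Definition psd f : ps R := fun n => d (f n).

Lemma psdM f g : psd (psmul f g) = psadd (psmul (psd f) g) (psmul f (psd g)).
Proof.
apply: functional_extensionality => n.
by rewrite /psd /psmul /psadd dsum -big_split; apply: eq_bigr => i _; rewrite dM.
Qed.

Lemma psd1 : psd (ps1 R) = (fun _ => 0).
Proof. by apply: functional_extensionality => n; rewrite /psd /ps1 dn. Qed.

Definition LD f := psmul (psd f) (psinv f).

Lemma LD1 : LD (ps1 R) = (fun _ => 0).
Proof. by rewrite /LD psd1 psmul0l. Qed.

Lemma LDM f g : psunit f -> psunit g -> LD (psmul f g) = psadd (LD f) (LD g).
Proof.
move=> uf ug; rewrite /LD psinvM // psdM psmulDl.
rewrite psmulACA (psmulV ug) psmul1r.
by rewrite psmulACA (psmulV uf) psmul1l.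
Qed.

Lemma LDV f : psunit f -> LD (psinv f) = psscale (-1) (LD f).
Proof.
move=> u; rewrite /LD psinvK //.
have h := psdM f (psinv f); rewrite psmulV // psd1 in h.
apply: functional_extensionality => n.
have h2 := congr1 (fun F => F n) h; rewrite /psadd /= in h2.
have h3 : psmul (psd f) (psinv f) n = - psmul f (psd (psinv f)) n.
  by apply/eqP; rewrite -addr_eq0 -h2.
by rewrite /psscale h3 mulN1r opprK psmulC.
Qed.

Lemma psunit_iter f n : psunit f -> psunit (iter n (psmul f) (ps1 R)).
Proof.
by move=> u; elim: n => [|n IH] /=; [exact: psunit1 | exact: psunitM].
Qed.

Lemma LD_iter f n : psunit f ->
  LD (iter n (psmul f) (ps1 R)) = psscale n%:R (LD f).
Proof.
move=> u; elim: n => [|n IH] /=.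
  by rewrite LD1; apply: functional_extensionality => t; rewrite /psscale mul0r.
rewrite LDM ?psunit_iter // IH.
by apply: functional_extensionality => t; rewrite /psadd /psscale mulrS mulrDl mul1r.
Qed.

Lemma psunit_expz f z : psunit f -> psunit (psexpz f z).
Proof.
move=> u; case: z => n; first exact: psunit_iter.
exact: (psunitV (@psunit_iter f n.+1 u)).
Qed.

Lemma LD_expz f z : psunit f -> LD (psexpz f z) = psscale z%:~R (LD f).
Proof.
move=> u; case: z => n; rewrite /psexpz; first by rewrite LD_iter.
rewrite LDV; last exact: (@psunit_iter f n.+1 u).
rewrite (@LD_iter f n.+1 u).
apply: functional_extensionality => t; rewrite /psscale NegzE mulrA.
congr (_ * _); rewrite mulN1r mulrNz; congr (- _).
Qed.

Lemma psunit_prod s : all psunit s -> psunit (psprod s).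
Proof.
elim: s => [|f s IH] /=; first by move=> _; exact: psunit1.
by move=> /andP[u us]; apply: psunitM => //; apply: IH.
Qed.

Lemma LD_prod s t : all psunit s -> LD (psprod s) t = \sum_(f <- s) LD f t.
Proof.
elim: s => [|f s IH] /=; first by move=> _; rewrite big_nil LD1.
move=> /andP[u us]; rewrite big_cons LDM //; last exact: psunit_prod.
by rewrite /psadd IH.
Qed.

End Der.
End PSA.


Lemma sum_ext (R : nmodType) (a b c : nat) (F : nat -> R) :
  (forall i, (b <= i)%N -> F i = 0) -> (a <= b)%N -> (b <= c)%N ->
  \sum_(a <= i < c) F i = \sum_(a <= i < b) F i.
Proof.
move=> hF hab hbc; rewrite (@big_cat_nat _ _ _ b) //=.
rewrite [X in _ + X](_ : _ = 0) ?addr0 //.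
rewrite big_nat_cond big1 // => i /andP[/andP[hi _] _]; exact: hF.
Qed.

Lemma sum_ind (R : pzSemiRingType) (a b c : nat) (F : nat -> R) :
  \sum_(a <= r < b) (r == c)%:R * F r = if (a <= c < b)%N then F c else 0.
Proof.
case: ifP => h.
  have h1 : (a <= c)%N by lia.
  have h2 : (c <= b)%N by lia.
  rewrite (@big_cat_nat _ _ _ c) //= (@big_ltn _ _ _ c b); last by lia.
  rewrite eqxx mul1r [X in X + _](_ : _ = 0) ?add0r; last first.
    rewrite big_nat_cond big1 // => i /andP[/andP[_ hi] _].
    rewrite (_ : (i == c) = false) ?mul0r //; lia.
  rewrite [X in _ + X](_ : _ = 0) ?addr0 //.
  rewrite big_nat_cond big1 // => i /andP[/andP[hi _] _].
  rewrite (_ : (i == c) = false) ?mul0r //; lia.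
rewrite big_nat_cond big1 // => i /andP[/andP[h1 h2] _].
rewrite (_ : (i == c) = false) ?mul0r //; lia.
Qed.

Lemma sign_lem (R : pzRingType) (i : nat) : (0 < i)%N -> ((-1) ^+ (i - 1) * (-1) ^+ i = -1 :> R).
Proof.
case: i => [//|i] _.
by rewrite subSS subn0 -exprD -signr_odd addnS /= addnn odd_double /= expr1.
Qed.

Lemma intr_nat (R : pzRingType) (n : nat) : ((n%:Z)%:~R : R) = n%:R.
Proof. by []. Qed.

Section Core.
Variables (K m : nat).
Hypotheses (om : odd m) (m3 : (3 <= m)%N) (hK : ((m - 3)./2 < K)%N).

Local Notation R := (MP K).
Local Notation d := (@pdz K ((m - 3)./2)).
Local Notation E := (H1 K).

Lemma H1list_size n : size (H1list K n) = n.+1.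
Proof. by elim: n => [|n IH] //=; rewrite size_rcons IH. Qed.

Lemma H1listE n i : (i <= n)%N -> nth (ps1 R) (H1list K n) i = E i.
Proof.
elim: n i => [|n IH] i hi; first by case: i hi.
rewrite /= nth_rcons H1list_size; case: ltnP => h; first exact: IH.
have -> : i = n.+1 by lia.
by rewrite eqxx /H1 /= nth_rcons H1list_size ltnn eqxx.
Qed.

Lemma H1S j : E j.+1 = fun t => (j.+1%:R)^-1 *
   \sum_(1 <= i < j.+2) (-1) ^+ (i - 1) * psmul (Hs K i) (E (j.+1 - i)%N) t.
Proof.
rewrite {1}/H1 /= nth_rcons H1list_size ltnn eqxx.
apply: functional_extensionality => t; congr (_ * _).
apply: eq_big_nat => i /andP[h1 h2]; rewrite H1listE //; lia.
Qed.

Definition Nw j s := \sum_(1 <= i < j.+1) \sum_(1 <= r < s.+1)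
   'C(i + r - 1, i - 1)%:R * zeta K (i + r) * E (j - i)%N (s - r)%N.

Lemma newton j s : j%:R * E j s = - Nw j s.
Proof.
case: j => [|j]; first by rewrite mul0r /Nw big_geq // oppr0.
rewrite H1S mulrA mulrV ?MP_unit // mul1r /Nw -sumrN.
apply: eq_big_nat => i /andP[i1 i2].
rewrite /psmul big_ord_recl /= {1}/Hs /= mul0r add0r.
rewrite big_add1 /= big_mkord mulr_sumr -sumrN; apply: eq_bigr => r _.
rewrite /bump /= /Hs /= add1n.
by rewrite !mulrA (sign_lem R i1) mulN1r !mulNr.
Qed.

Definition gam l : R := 'C(m.-1, l.-1)%:R / l%:R.
Definition G j s l : R :=
  if (l <= j)%N && (m - l <= s)%N then E (j - l)%N (s - (m - l))%N else 0.

Lemma dNw j s : d (Nw j s) =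
  \sum_(1 <= i < j.+1) \sum_(1 <= r < s.+1)
     'C(i + r - 1, i - 1)%:R * (i + r == m)%:R * E (j - i)%N (s - r)%N +
  \sum_(1 <= i < j.+1) \sum_(1 <= r < s.+1)
     'C(i + r - 1, i - 1)%:R * zeta K (i + r) * d (E (j - i)%N (s - r)%N).
Proof.
rewrite /Nw pdz_sum -big_split; apply: eq_bigr => i _.
rewrite pdz_sum -big_split; apply: eq_bigr => r _.
by rewrite pdzM pdzM pdzn mul0r add0r pdz_zeta // mulrA.
Qed.

Lemma A_eq j s :
  \sum_(1 <= i < j.+1) \sum_(1 <= r < s.+1)
     'C(i + r - 1, i - 1)%:R * (i + r == m)%:R * E (j - i)%N (s - r)%N =
  \sum_(1 <= l < m) 'C(m.-1, l.-1)%:R * G j s l.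
Proof.
pose HH l : R := if (l < m)%N && (m - l <= s)%N && (l <= j)%N
   then 'C(m.-1, l.-1)%:R * E (j - l)%N (s - (m - l))%N else 0.
transitivity (\sum_(1 <= i < j.+1) HH i).
  apply: eq_big_nat => i /andP[i1 i2].
  transitivity (\sum_(1 <= r < s.+1) (r == m - i)%N%:R *
      (if (i < m)%N then 'C(m.-1, i.-1)%:R * E (j - i)%N (s - (m - i))%N else 0)).
    apply: eq_big_nat => r /andP[r1 r2].
    have [e|ne] := boolP (i + r == m).
      rewrite (_ : (r == m - i)%N); last by lia.
      rewrite (_ : (i < m)%N); last by lia.
      rewrite mulr1 mul1r.
      have -> : (i + r - 1 = m.-1)%N by lia.
      have -> : (i - 1 = i.-1)%N by lia.
      have -> : (s - r = s - (m - i))%N by lia.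
      done.
    rewrite mulr0 mul0r.
    have [e2|ne2] := eqVneq r (m - i)%N; last by rewrite mul0r.
    by rewrite (_ : (i < m)%N = false) ?mulr0 //; lia.
  rewrite sum_ind /HH.
  by repeat (case: ifP => ?); try lia.
transitivity (\sum_(1 <= l < m) HH l); last first.
  apply: eq_big_nat => l /andP[l1 l2]; rewrite /HH /G.
  case: ifP => c1; case: ifP => c2 //; try lia; by rewrite mulr0.
have hM1 : (j.+1 <= maxn j.+1 m)%N by rewrite leq_maxl.
have hM2 : (m <= maxn j.+1 m)%N by rewrite leq_maxr.
rewrite -(@sum_ext _ 1 j.+1 (maxn j.+1 m)) //; last first.
  by move=> i hi; rewrite /HH ifF //; lia.
rewrite -(@sum_ext _ 1 m (maxn j.+1 m)) //; last by lia.
by move=> i hi; rewrite /HH ifF //; lia.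
Qed.

Lemma B_inner j s l : (1 <= l < m)%N ->
  \sum_(1 <= i < j.+1) \sum_(1 <= r < s.+1)
     'C(i + r - 1, i - 1)%:R * zeta K (i + r) * G (j - i)%N (s - r)%N l
  = - (j - l)%:R * G j s l.
Proof.
move=> hl.
have [c|c] := boolP ((l <= j)%N && (m - l <= s)%N); last first.
  rewrite {2}/G (negbTE c) mulr0.
  rewrite big_nat_cond big1 // => i /andP[/andP[i1 i2] _].
  rewrite big_nat_cond big1 // => r /andP[/andP[r1 r2] _].
  by rewrite /G ifF ?mulr0 //; lia.
rewrite {2}/G c mulNr newton opprK.
set j' := (j - l)%N; set s' := (s - (m - l))%N.
pose S i r : R := if (i <= j')%N && (r <= s')%N then
   'C(i + r - 1, i - 1)%:R * zeta K (i + r) * E (j' - i)%N (s' - r)%N else 0.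
transitivity (\sum_(1 <= i < j.+1) \sum_(1 <= r < s.+1) S i r).
  apply: eq_big_nat => i /andP[i1 i2]; apply: eq_big_nat => r /andP[r1 r2].
  rewrite /G /S; case: ifP => c1; case: ifP => c2; try lia; last by rewrite mulr0.
  have -> : (j - i - l = j' - i)%N by rewrite /j'; lia.
  have -> : (s - r - (m - l) = s' - r)%N by rewrite /s'; lia.
  done.
have hj : (j'.+1 <= j.+1)%N by rewrite /j'; lia.
have hs : (s'.+1 <= s.+1)%N by rewrite /s'; lia.
rewrite (@sum_ext _ 1 j'.+1 j.+1) //; last first.
  move=> i hi; rewrite big_nat_cond big1 // => r _; rewrite /S ifF //; lia.
rewrite /Nw; apply: eq_big_nat => i /andP[i1 i2].
rewrite (@sum_ext _ 1 s'.+1 s.+1) //; last first.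
  move=> r hr; rewrite /S ifF //; lia.
apply: eq_big_nat => r /andP[r1 r2]; rewrite /S ifT //; lia.
Qed.

Lemma dE j s : d (E j s) = - \sum_(1 <= l < m) gam l * G j s l.
Proof.
elim/ltn_ind: j s => j IH s.
case: j IH => [|j] IH.
  rewrite /H1 /= /ps1 pdzn big_nat_cond big1 ?oppr0 // => l /andP[/andP[l1 _] _].
  by rewrite /G ifF ?mulr0 //; lia.
apply: (mulrI (MP_unit K (ltn0Sn j))) => /=.
have h : d (j.+1%:R * E j.+1 s) = j.+1%:R * d (E j.+1 s).
  by rewrite pdzM pdzn mul0r add0r.
rewrite -h newton pdzN dNw A_eq.
have hB : \sum_(1 <= i < j.+2) \sum_(1 <= r < s.+1)
     'C(i + r - 1, i - 1)%:R * zeta K (i + r) * d (E (j.+1 - i)%N (s - r)%N)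
   = \sum_(1 <= l < m) - (gam l * \sum_(1 <= i < j.+2) \sum_(1 <= r < s.+1)
     'C(i + r - 1, i - 1)%:R * zeta K (i + r) * G (j.+1 - i)%N (s - r)%N l).
  transitivity (\sum_(1 <= i < j.+2) \sum_(1 <= r < s.+1) \sum_(1 <= l < m)
     - ('C(i + r - 1, i - 1)%:R * zeta K (i + r) * (gam l * G (j.+1 - i)%N (s - r)%N l))).
    apply: eq_big_nat => i /andP[i1 i2]; apply: eq_big_nat => r /andP[r1 r2].
    by rewrite IH ?mulrN ?mulr_sumr ?sumrN //; lia.
  under eq_bigr => i _ do rewrite (@exchange_big_nat _ _ _ 1 s.+1 1 m).
  rewrite (@exchange_big_nat _ _ _ 1 j.+2 1 m) /=.
  apply: eq_bigr => l _.
  rewrite mulr_sumr -sumrN; apply: eq_bigr => i _.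
  rewrite mulr_sumr -sumrN; apply: eq_bigr => r _.
  by rewrite mulrCA.
rewrite hB -big_split /= mulrN mulr_sumr; congr (- _).
apply: eq_big_nat => l hl; rewrite B_inner //.
rewrite /G; case: ifP => c; last by rewrite !mulr0 oppr0 addr0.
have l0 : (0 < l)%N by lia.
have hC : 'C(m.-1, l.-1)%:R = gam l * l%:R :> R by rewrite /gam divrK // MP_unit.
rewrite hC natrB; last by lia.
ring.
Qed.

Lemma C_inner (a : R) t l : (1 <= l < m)%N ->
  \sum_(0 <= j < t.+1) a ^+ j * G j (t - j)%N l =
  if (m <= t)%N then a ^+ l * \sum_(0 <= j < (t - m).+1) a ^+ j * E j (t - m - j)%N
  else 0.
Proof.
move=> hl; case: leqP => hmt; last first.
  rewrite big_nat_cond big1 // => j _; rewrite /G ifF ?mulr0 //; lia.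
have h1 : (0 <= l)%N by [].
have h2 : (l <= t.+1)%N by lia.
rewrite (@big_cat_nat _ _ _ l) //= [X in X + _](_ : _ = 0) ?add0r; last first.
  rewrite big_nat_cond big1 // => j /andP[/andP[_ hj] _]; rewrite /G ifF ?mulr0 //; lia.
rewrite (@sum_ext _ l (l + (t - m).+1) t.+1); last by lia.
- rewrite (big_addn 0 (l + (t - m).+1) l) addKn mulr_sumr.
  apply: eq_big_nat => j /andP[_ hj].
  rewrite /G ifT; last by lia.
  have -> : (j + l - l = j)%N by lia.
  have -> : (t - (j + l) - (m - l) = t - m - j)%N by lia.
  by rewrite exprD mulrCA mulrA.
- by move=> j hj; rewrite /G ifF ?mulr0 //; lia.
- by lia.
Qed.

Definition gc n : R := - \sum_(1 <= l < m) gam l * (n.-1)%:R ^+ l.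

Lemma cserE n t : cser K n t =
  n%:R * \sum_(0 <= j < t.+1) (n.-1)%:R ^+ j * E j (t - j)%N.
Proof. by rewrite /cser big_mkord. Qed.

Lemma dcser n t : d (cser K n t) =
  if (m <= t)%N then gc n * cser K n (t - m)%N else 0.
Proof.
rewrite !cserE pdzM pdzn mul0r add0r pdz_sum.
transitivity (n%:R * \sum_(1 <= l < m) - (gam l *
   \sum_(0 <= j < t.+1) (n.-1)%:R ^+ j * G j (t - j)%N l)).
  congr (_ * _).
  transitivity (\sum_(0 <= j < t.+1) \sum_(1 <= l < m)
     - (gam l * ((n.-1)%:R ^+ j * G j (t - j)%N l))).
    apply: eq_bigr => j _.
    rewrite -natrX pdzM pdzn mul0r add0r dE mulrN mulr_sumr -sumrN.
    by apply: eq_bigr => l _; rewrite mulrCA.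
  rewrite (@exchange_big_nat _ _ _ 0 t.+1 1 m) /=.
  apply: eq_bigr => l _; rewrite mulr_sumr -sumrN; apply: eq_bigr => j _.
  done.
transitivity (n%:R * \sum_(1 <= l < m) - (gam l *
   if (m <= t)%N then (n.-1)%:R ^+ l * \sum_(0 <= j < (t - m).+1)
      (n.-1)%:R ^+ j * E j (t - m - j)%N else 0)).
  congr (_ * _); apply: eq_big_nat => l hl; by rewrite C_inner.
case: leqP => hmt; last first.
  by rewrite big1 ?mulr0 // => l _; rewrite mulr0 oppr0.
rewrite /gc; set S := (\sum_(0 <= j < (t - m).+1) _).
rewrite mulNr mulr_suml mulr_sumr -sumrN; apply: eq_bigr => l _.
ring.
Qed.

Lemma gc_eq n : (0 < n)%N ->
  gc n = - (m%:R)^-1 * ((n%:R) ^+ m - 1 - ((n.-1)%:R) ^+ m).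
Proof.
move=> n0.
have m0 : (0 < m)%N by lia.
have hg : forall l, (1 <= l < m)%N -> gam l = 'C(m, l)%:R / m%:R.
  move=> l hl; rewrite /gam.
  have l0 : (0 < l)%N by lia.
  have e : ('C(m.-1, l.-1) * m = 'C(m, l) * l)%N.
    by rewrite mulnC mul_bin_diag prednK // mulnC.
  apply: (mulIr (MP_unit K l0)); rewrite divrK ?MP_unit //.
  apply: (mulIr (MP_unit K m0)).
  rewrite -mulrA (mulrC (l%:R)) mulrA divrK ?MP_unit //.
  by rewrite -!natrM e.
set a : R := (n.-1)%:R.
have hn : (n%:R : R) = a + 1 by rewrite /a natr1 prednK.
have hbin : \sum_(1 <= l < m) 'C(m, l)%:R * a ^+ l = (a + 1) ^+ m - 1 - a ^+ m.
  rewrite exprD1n -(@big_mkord _ _ _ m.+1 xpredT (fun i => a ^+ i *+ 'C(m, i))) big_ltn // big_nat_recr /=; last by lia.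
  rewrite bin0 binn expr0 !mulr1n.
  have -> : \sum_(1 <= i < m) a ^+ i *+ 'C(m, i) = \sum_(1 <= l < m) 'C(m, l)%:R * a ^+ l.
    by apply: eq_bigr => i _; rewrite mulr_natl.
  ring.
rewrite /gc hn -hbin.
rewrite mulNr; congr (- _); rewrite mulr_sumr; apply: eq_big_nat => l hl.
rewrite hg //; ring.
Qed.


Lemma cser_unit n : (0 < n)%N -> psunit (cser K n).
Proof.
move=> n0; rewrite /psunit cserE big_nat1 expr0 mul1r /H1 /= /ps1 /= mulr1.
exact: MP_unit.
Qed.

Lemma LD_cser n : (0 < n)%N -> LD d (cser K n) = fun t => gc n * (t == m)%:R.
Proof.
move=> n0.
have hd : psd d (cser K n) = psmul (psscale (gc n) (psE R m)) (cser K n).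
  apply: functional_extensionality => t.
  rewrite psmulZl /psscale psmulEl /psd dcser.
  by case: ifP => _; rewrite ?mulr0.
rewrite /LD hd -psmulA psmulV ?cser_unit // psmul1r.
by apply: functional_extensionality => t; rewrite /psscale /psE.
Qed.

Lemma sum_gc b : \sum_(0 <= j < b) gc j.+1 = - (m%:R)^-1 * ((b%:R) ^+ m - b%:R).
Proof.
elim: b => [|b IH].
  by rewrite big_geq // expr0n /= gtn_eqF ?subrr ?mulr0 //; lia.
rewrite big_nat_recr //= IH gc_eq //= -natr1.
ring.
Qed.

Lemma cprod_unit b : psunit (cprod K b).
Proof.
apply: psunit_prod; rewrite all_map; apply/allP => j _ /=; exact: cser_unit.
Qed.

Lemma LD_cprod b t : LD d (cprod K b) t = - (m%:R)^-1 * ((b%:R) ^+ m - b%:R) * (t == m)%:R.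
Proof.
rewrite /cprod (LD_prod (@pdzD K _) (@pdzM K _)); last first.
  rewrite all_map; apply/allP => j _ /=; exact: cser_unit.
rewrite big_map -sum_gc mulr_suml.
rewrite (_ : iota 0 b = index_iota 0 b); last by rewrite /index_iota subn0.
by apply: eq_bigr => j _; rewrite LD_cser.
Qed.

Lemma main_core k (b : 'I_k -> nat) (n : 'I_k -> int)
    (hsum : \sum_(i < k) n i * (b i)%:Z = 0) (N : nat) :
  LD d (alpha K b n) N
  = (if N == m then - (m%:R)^-1 * (\sum_(i < k) n i * (b i)%:Z ^+ m)%:~R
     else 0).
Proof.
rewrite /alpha (LD_prod (@pdzD K _) (@pdzM K _)); last first.
  rewrite all_map; apply/allP => i _ /=; apply: psunit_expz; exact: cprod_unit.
rewrite big_map big_enum /=.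
under eq_bigr => i _ do rewrite (LD_expz (@pdzD K _) (@pdzM K _)) ?cprod_unit // /psscale LD_cprod.
case: eqP => hN; last first.
  by rewrite big1 // => i _; rewrite /= !mulr0.
have H0 : \sum_(i < k) (n i)%:~R * (b i)%:R = 0 :> R.
  transitivity ((\sum_(i < k) n i * (b i)%:Z)%:~R : R); last by rewrite hsum.
  rewrite rmorph_sum; apply: eq_bigr => i _; by rewrite rmorphM /= intr_nat.
rewrite rmorph_sum /=.
transitivity (- (m%:R : R)^-1 * (\sum_(i < k) (n i)%:~R * (b i)%:R ^+ m
   - \sum_(i < k) (n i)%:~R * (b i)%:R)); last first.
  rewrite H0 subr0; congr (_ * _); apply: eq_bigr => i _.
  by rewrite rmorphM rmorphXn /= intr_nat.
rewrite -sumrB mulr_sumr; apply: eq_bigr => i _.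
by rewrite (_ : true%:R = 1 :> R) //; ring.
Qed.

End Core.

End Helpers.
Import Helpers.

Theorem mainTheorem12 (k : nat) (b : 'I_k -> nat) (n : 'I_k -> int)
    (hb : forall i, (0 < b i)%N)
    (hsum : \sum_(i < k) n i * (b i)%:Z = 0)
    (m : nat) (hm_odd : odd m) (hm3 : (3 <= m)%N)
    (K : nat) (hK : ((m - 3)./2 < K)%N) (N : nat) :
  psmul (delta m (alpha K b n)) (psinv (alpha K b n)) N
  = (if N == m then - (m%:R)^-1 * (\sum_(i < k) n i * (b i)%:Z ^+ m)%:~R
     else 0).
Proof.
exact: (main_core hm_odd hm3 hK hsum N).
Qed.
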